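(* Let $\Delta$ be a simplicial complex on $[n]$ with $I_\Delta\neq 0$, let $k$ be the initial degree of $I_\Delta$, and let $d=(d_1,\dots,d_n)$ with $d_i\ge 2$ for $1\le i\le n$. Then the initial degree of $I_{M(\Delta,d)}$ is $2^{k-1}$.
   Context: A simplicial complex on $[n]$ is a nonempty family of subsets of $[n]$ closed under subsets (not every singleton need be a face); facets are inclusion-maximal faces. $I_\Delta=(\prod_{i\in\sigma}x_i:\sigma\subseteq[n],\sigma\notin\Delta)\subset K[x_1,\dots,x_n]$ is the Stanley–Reisner ideal. The initial degree of a nonzero homogeneous ideal is the smallest degree of a minimal generator. Hierarchical model: $M(\Delta,d)$ is the $0/1$ matrix with columns indexed by cells $c\in\mathcal C=[d_1]\times\cdots\times[d_n]$ and rows indexed by pairs $(F,a)$, $F$ a facet, $a\in\prod_{i\in F}[d_i]$, entry $1$ iff $c|_F=a$. Its toric ideal $I_{M(\Delta,d)}\subset K[p_c:c\in\mathcal C]$ is generated by binomials $p^u-p^v$, $u,v\in\mathbb N^{\mathcal C}$, $Mu=Mv$, and is homogeneous. *)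

(* Defs.v *)
From HB Require Import structures.
From mathcomp Require Import all_boot all_algebra.
From mathcomp Require Import mpoly.
Set Implicit Arguments. Unset Strict Implicit. Unset Printing Implicit Defensive.
Import GRing.Theory.
Local Open Scope ring_scope.

Definition ideal_gen (R : comNzRingType) (m : nat)
  (G : {mpoly R[m]} -> Prop) (p : {mpoly R[m]}) : Prop :=
  exists s : seq ({mpoly R[m]} * {mpoly R[m]}),
    (forall x, x \in s -> G x.2) /\ p = \sum_(x <- s) x.1 * x.2.

Definition ideal_nonzero (R : comNzRingType) (m : nat) (I : {mpoly R[m]} -> Prop) :=
  exists p, I p /\ p != 0.

(* Initial degree of a nonzero homogeneous ideal I: the least k such that I
   contains a nonzero homogeneous (total-degree) element of degree k
   (= smallest degree of a minimal homogeneous generator). *)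
Definition initial_degree (R : comNzRingType) (m : nat)
  (I : {mpoly R[m]} -> Prop) (k : nat) : Prop :=
  (exists p, [/\ I p, p != 0 & p \is k.-homog]) /\
  (forall p j, I p -> p != 0 -> p \is j.-homog -> (k <= j)%N).

Definition simplicial_complex (n : nat) (Delta : {set {set 'I_n}}) : Prop :=
  Delta != set0 /\ forall s t : {set 'I_n}, s \in Delta -> t \subset s -> t \in Delta.

Definition facet (n : nat) (Delta : {set {set 'I_n}}) (F : {set 'I_n}) : Prop :=
  F \in Delta /\ forall G, G \in Delta -> F \subset G -> G = F.

Definition SR_gen (K : comNzRingType) (n : nat) (Delta : {set {set 'I_n}})
  (f : {mpoly K[n]}) : Prop :=
  exists sigma : {set 'I_n}, sigma \notin Delta /\ f = \prod_(i in sigma) 'X_i.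

Definition SR_ideal (K : comNzRingType) (n : nat) (Delta : {set {set 'I_n}}) :=
  ideal_gen (@SR_gen K n Delta).

Definition cell (n : nat) (d : 'I_n -> nat) := {dffun forall i : 'I_n, 'I_(d i)}.

Definition pvar (K : comNzRingType) (n : nat) (d : 'I_n -> nat) (c : cell d)
  : {mpoly K[#|{: cell d}|]} := 'X_(enum_rank c).

Definition pmonom (K : comNzRingType) (n : nat) (d : 'I_n -> nat)
  (u : {ffun cell d -> nat}) : {mpoly K[#|{: cell d}|]} :=
  \prod_(c : cell d) @pvar K n d c ^+ u c.

(* Row (F, a) of M(Delta,d), where a in prod_{i in F} [d_i] is represented as the
   restriction to F of a cell a0 (every such a arises this way); the entry in
   column c is 1 iff c|_F = a. (M u)_(F,a) is the sum of u over those cells. *)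
Definition agree_on (n : nat) (d : 'I_n -> nat) (F : {set 'I_n}) (c a0 : cell d) : bool :=
  [forall i : 'I_n, (i \in F) ==> (c i == a0 i)].

Definition Mmul (n : nat) (d : 'I_n -> nat) (F : {set 'I_n}) (a0 : cell d)
  (u : {ffun cell d -> nat}) : nat :=
  (\sum_(c : cell d | agree_on F c a0) u c)%N.

Definition same_fiber (n : nat) (Delta : {set {set 'I_n}}) (d : 'I_n -> nat)
  (u v : {ffun cell d -> nat}) : Prop :=
  forall F, facet Delta F -> forall a0 : cell d, Mmul F a0 u = Mmul F a0 v.

Definition toric_gen (K : comNzRingType) (n : nat) (Delta : {set {set 'I_n}})
  (d : 'I_n -> nat) (f : {mpoly K[#|{: cell d}|]}) : Prop :=
  exists u v : {ffun cell d -> nat},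
    same_fiber Delta u v /\ f = @pmonom K n d u - @pmonom K n d v.

Definition toric_ideal (K : comNzRingType) (n : nat) (Delta : {set {set 'I_n}})
  (d : 'I_n -> nat) := ideal_gen (@toric_gen K n Delta d).

(* Main.v *)
Require Import Defs.
From HB Require Import structures.
From mathcomp Require Import all_boot all_algebra.
From mathcomp Require Import mpoly.
From mathcomp Require Import zify.
Set Implicit Arguments. Unset Strict Implicit. Unset Printing Implicit Defensive.

Section Core.
Variables (C I : finType) (coord : C -> I -> nat).

Definition agreeS (S : {set I}) (f : I -> nat) (c : C) : bool :=
  [forall j in S, coord c j == f j].

Definition marg (S : {set I}) (f : I -> nat) (u : C -> nat) : nat :=
  \sum_(c | agreeS S f c) u c.

Definition inj_on (J : {set I}) (u v : C -> nat) :=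
  forall c c', 0 < u c + v c -> 0 < u c' + v c' ->
    (forall j, j \in J -> coord c j = coord c' j) -> c = c'.

Definition margeq (J : {set I}) (t : nat) (u v : C -> nat) :=
  forall S : {set I}, S \subset J -> #|S| <= t -> forall f, marg S f u = marg S f v.

Lemma marg0 f u : marg set0 f u = \sum_c u c.
Proof. by apply: eq_bigl => c; apply/forallP => j; rewrite inE. Qed.

Lemma core_t0 J u v : (exists c, u c != v c) -> margeq J 0 u v -> 0 < \sum_c u c.
Proof.
move=> [c0 ne] me; have := me set0 (sub0set J) (eq_leq (cards0 _)) (fun _ => 0).
rewrite !marg0 => E; rewrite lt0n; apply/negP => /eqP Z.
have Zu : forall c, u c = 0 by move=> c; apply/eqP; move: Z => /eqP; rewrite sum_nat_eq0 => /forallP /(_ c) /implyP; apply.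
have Zv : forall c, v c = 0.
  by move=> c; apply/eqP; move: E; rewrite Z => /esym/eqP; rewrite sum_nat_eq0 => /forallP /(_ c) /implyP; apply.
by move: ne; rewrite Zu Zv.
Qed.

Lemma core_J0 t u v : (exists c, u c != v c) -> inj_on set0 u v -> margeq set0 t u v -> False.
Proof.
move=> [c0 ne] inj me; have := me set0 (sub0set _) (leq_trans (eq_leq (cards0 _)) (leq0n t)) (fun _ => 0).
rewrite !marg0 (bigD1 c0) //= [X in _ = X](bigD1 c0) //=.
have Z : forall c, c != c0 -> u c + v c = 0.
  move=> c cne; apply/eqP; rewrite -leqn0 leqNgt; apply/negP => pos.
  have pos0 : 0 < u c0 + v c0 by move: ne; case: (u c0); case: (v c0).
  by move: cne; rewrite (inj _ _ pos pos0) ?eqxx // => j; rewrite inE.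
rewrite (@big1 _ _ _ _ _ _ u) => [|c /Z]; last by lia.
rewrite (@big1 _ _ _ _ _ _ v) => [|c /Z]; last by lia.
by rewrite !addn0 => E; move: ne; rewrite E eqxx.
Qed.

Definition slice (i : I) (a : nat) (u : C -> nat) (c : C) : nat :=
  if coord c i == a then u c else 0.

Lemma marg_slice (i : I) (a : nat) (S : {set I}) (f : I -> nat) (u : C -> nat) : i \notin S ->
  marg S f (slice i a u) = marg (i |: S) (fun j => if j == i then a else f j) u.
Proof.
move=> iS; rewrite /marg /slice big_mkcond [RHS]big_mkcond; apply: eq_bigr => c _.
have -> : agreeS (i |: S) (fun j => if j == i then a else f j) c = (coord c i == a) && agreeS S f c.
  apply/forallP/andP => [H|[H1 /forallP H2] j].
    split; first by have := H i; rewrite setU11 eqxx.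
    apply/forallP => j; apply/implyP => jS; have := H j; rewrite setU1r //=.
    case: (eqVneq j i) => [ji|_] /=; [by move: iS; rewrite -ji jS | by []].
  apply/implyP; rewrite in_setU1; case: eqP => [->|_] //= jS.
  by have := H2 j; rewrite jS.
by case: (coord c i == a); case: (agreeS S f c).
Qed.

Lemma sum_slice_le i a u : \sum_c slice i a u c <= \sum_c u c.
Proof. by apply: leq_sum => c _; rewrite /slice; case: ifP. Qed.

Lemma sum_slice2_le i a b u : a != b ->
  \sum_c slice i a u c + \sum_c slice i b u c <= \sum_c u c.
Proof.
move=> ab; rewrite -big_split; apply: leq_sum => c _; rewrite /slice.
case: eqP => [->|_]; last by case: ifP.
by rewrite (negbTE ab) /= addn0.
Qed.

Lemma core m : forall t (J : {set I}) (u v : C -> nat), #|J| <= m ->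
  inj_on J u v -> (exists c, u c != v c) -> margeq J t u v -> 2 ^ t <= \sum_c u c.
Proof.
elim: m => [|m IH] [|t] J u v cJ inj ne me; try by rewrite expn0; exact: core_t0 ne me.
  by move: cJ; rewrite leqn0 cards_eq0 => /eqP J0; subst J; case: (core_J0 ne inj me).
have [J0|[i iJ]] := set_0Vmem J.
  by subst J; case: (core_J0 ne inj me).
set J' := J :\ i.
have cJ' : #|J'| <= m by move: cJ; rewrite (cardsD1 i J) iJ.
have sJ' : J' \subset J by apply: subD1set.
have iJ' : i \notin J' by rewrite setD11.
have inj_sl : forall a, inj_on J' (slice i a u) (slice i a v).
  move=> a c c'; rewrite /slice; case: (eqP (x := coord c i)) => [ci|]; last by rewrite addn0.
  case: (eqP (x := coord c' i)) => [ci'|]; last by rewrite addn0.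
  move=> p1 p2 agr; apply: inj p1 p2 _ => j jJ.
  case: (eqVneq j i) => [->|ji]; first by rewrite ci ci'.
  by apply: agr; rewrite in_setD1 ji.
have me_sl : forall a t', t' <= t -> margeq J' t' (slice i a u) (slice i a v).
  move=> a t' tt S SJ' cS f; rewrite !marg_slice; last first.
  - by apply/negP => /(subsetP SJ'); rewrite (negbTE iJ').
  - by apply/negP => /(subsetP SJ'); rewrite (negbTE iJ').
  apply: me.
    by rewrite subUset sub1set iJ (subset_trans SJ' sJ').
  rewrite cardsU1; have -> : (i \notin S) by apply/negP => /(subsetP SJ'); rewrite (negbTE iJ').
  by rewrite add1n ltnS (leq_trans cS tt).
case: (boolP [exists c1, exists c2, [&& coord c1 i != coord c2 i, u c1 != v c1 & u c2 != v c2]]).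
  move=> /existsP [c1 /existsP [c2 /and3P [c12 n1 n2]]].
  have h1 := IH t J' (slice i (coord c1 i) u) (slice i (coord c1 i) v) cJ' (inj_sl _) _ (me_sl _ _ (leqnn t)).
  have h2 := IH t J' (slice i (coord c2 i) u) (slice i (coord c2 i) v) cJ' (inj_sl _) _ (me_sl _ _ (leqnn t)).
  have := @sum_slice2_le i _ _ u c12.
  rewrite expnS mul2n -addnn => H; apply: leq_trans H; apply: leq_add.
    by apply: h1; exists c1; rewrite /slice eqxx.
  by apply: h2; exists c2; rewrite /slice eqxx.
move=> nA; case: ne => [c0 n0]; set a := coord c0 i.
have eqo : forall c, coord c i != a -> u c = v c.
  move=> c ca; apply/eqP; apply/negP => /negP nc; move/negP: nA; apply.
  by apply/existsP; exists c0; apply/existsP; exists c; rewrite eq_sym ca n0 nc.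
apply: leq_trans (sum_slice_le i a u).
apply: IH cJ' (inj_sl a) _ _; first by exists c0; rewrite /slice eqxx.
move=> S SJ' cS f.
have spl : forall w : C -> nat, marg S f w = marg S f (slice i a w) +
    \sum_(c | agreeS S f c && (coord c i != a)) w c.
  move=> w; rewrite /marg (bigID (fun c => coord c i == a)) /=; congr (_ + _).
  rewrite big_mkcondr; apply: eq_bigr => c _; rewrite /slice.
  by case: ifP.
have hS := me S (subset_trans SJ' sJ') cS f.
move: hS; rewrite (spl u) (spl v).
have -> : \sum_(c | agreeS S f c && (coord c i != a)) u c =
          \sum_(c | agreeS S f c && (coord c i != a)) v c.
  by apply: eq_bigr => c /andP [_ ca]; apply: eqo.
by move/addIn.
Qed.

End Core.

Section IdealBound.
Import GRing.Theory.
Local Open Scope ring_scope.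
Lemma ideal_deg_bound (R : comNzRingType) (m : nat) (G : {mpoly R[m]} -> Prop) (D j : nat) p :
  (forall g, G g -> forall mm, mm \in msupp g -> (D <= mdeg mm)%N) ->
  ideal_gen G p -> p != 0 -> p \is j.-homog -> (D <= j)%N.
Proof.
move=> HG [s [Hs ->]] pnz hom.
have [mm mmin] : exists mm, mm \in msupp (\sum_(x <- s) x.1 * x.2).
  case E: (msupp (\sum_(x <- s) x.1 * x.2)) => [|a l]; last by exists a; rewrite inE eqxx.
  by move: pnz; rewrite -msupp_eq0 E.
have := dhomog_mf hom mmin => degmm.
rewrite leqNgt; apply/negP => ltjD.
move: mmin; rewrite -[_ \in _]negbK -mcoeff_eq0 => /negP; apply.
rewrite raddf_sum /= big_seq big1 // => x xin.
apply/eqP; rewrite mcoeff_eq0; apply/negP => /msuppM_le /allpairsP [[m1 m2] [/= _ m2in mmE]].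
have := HG _ (Hs _ xin) _ m2in.
rewrite leqNgt => /negP; apply; apply: leq_ltn_trans _ ltjD; rewrite -degmm mmE; exact: (leq_trans (leq_addl (mdeg m1) (mdeg m2)) (eq_leq (esym (mdegD m1 m2)))).
Qed.


End IdealBound.
Lemma facet_exists n (Delta : {set {set 'I_n}}) T :
  T \in Delta -> exists F, facet Delta F /\ T \subset F.
Proof.
move=> TD.
have P0 : (T \in Delta) && (T \subset T) by rewrite TD subxx.
case: (@arg_maxnP _ T (fun G : {set 'I_n} => (G \in Delta) && (T \subset G)) (fun G => #|G|) P0) => F /andP [FD TF] Fmax.
exists F; split => //; split => // G GD FG.
apply/eqP; rewrite eq_sym eqEcard FG /=.
by apply: Fmax; rewrite GD (subset_trans TF FG).
Qed.

Section Agree.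
Variables (n : nat) (d : 'I_n -> nat) (F : {set 'I_n}).

Lemma agree_refl (c : cell d) : agree_on F c c.
Proof. by apply/forallP => i; apply/implyP. Qed.
Lemma agree_sym (c c' : cell d) : agree_on F c c' -> agree_on F c' c.
Proof. by move=> /forallP H; apply/forallP => i; apply/implyP => /(implyP (H i)) /eqP ->. Qed.
Lemma agree_trans (c1 c2 c3 : cell d) : agree_on F c1 c2 -> agree_on F c2 c3 -> agree_on F c1 c3.
Proof.
move=> /forallP H1 /forallP H2; apply/forallP => i; apply/implyP => iF.
by rewrite (eqP (implyP (H1 i) iF)) (implyP (H2 i) iF).
Qed.

Definition rep (c : cell d) : cell d := odflt c [pick c' | agree_on F c' c].

Lemma rep_agree (c : cell d) : agree_on F (rep c) c.
Proof. by rewrite /rep; case: pickP => [x ->|/(_ c)] //=; rewrite agree_refl. Qed.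

Lemma rep_eq (c c' : cell d) : agree_on F c c' -> rep c = rep c'.
Proof.
move=> a; rewrite /rep; have -> : [pick x | agree_on F x c] = [pick x | agree_on F x c'].
  apply: eq_pick => x /=; apply/idP/idP => h.
    exact: agree_trans h a.
  exact: agree_trans h (agree_sym a).
by case: pickP => [x _|/(_ c')] //=; rewrite agree_refl.
Qed.

Lemma marg_from_facet (S : {set 'I_n}) (f : 'I_n -> nat) (w : {ffun cell d -> nat}) :
  S \subset F ->
  (\sum_(c : cell d | [forall j in S, (c j : nat) == f j]) w c)%N =
  (\sum_(r : cell d | [forall j in S, (r j : nat) == f j] && (rep r == r)) Mmul F r w)%N.
Proof.
move=> SF.
have agS : forall c c' : cell d, agree_on F c c' ->
    [forall j in S, (c j : nat) == f j] = [forall j in S, (c' j : nat) == f j].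
  move=> c c' ac.
  have E : forall j, j \in S -> (c j : nat) = c' j.
    by move=> j jS; rewrite (eqP (implyP (forallP ac j) (subsetP SF j jS))).
  apply/forallP/forallP => H j; apply/implyP => jS; have := implyP (H j) jS; by rewrite E.
rewrite (partition_big rep (fun r : cell d => [forall j in S, (r j : nat) == f j] && (rep r == r))).
  apply: eq_bigr => r /andP [Ar /eqP rr]; rewrite /Mmul; apply: eq_bigl => c.
  apply/andP/idP => [[_ /eqP <-]|a]; first by apply: agree_sym; apply: rep_agree.
  by rewrite (agS _ _ a) Ar (rep_eq a) rr.
move=> c Ac; rewrite -(agS _ _ (agree_sym (rep_agree c))) Ac /=.
by rewrite (rep_eq (rep_agree c)).
Qed.

End Agree.
Section Construct.
Variables (n : nat) (d : 'I_n -> nat) (d2 : forall i, (2 <= d i)%N) (sigma : {set 'I_n}).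

Lemma lt_sub1 i x : (1 - x < d i)%N.
Proof. have := d2 i; lia. Qed.
Lemma lt_bit i (b : bool) : (b < d i)%N.
Proof. have := d2 i; case: b => /=; lia. Qed.

Definition flipc (j : 'I_n) (c : cell d) : cell d :=
  [ffun i => if (i == j) && (c i <= 1)%N then Ordinal (lt_sub1 i (c i)) else c i].

Lemma flipcE j c i : (flipc j c i : nat) = if (i == j) && (c i <= 1)%N then (1 - c i)%N else c i.
Proof. by rewrite /flipc ffunE; case: ifP. Qed.

Lemma flipcK j : involutive (flipc j).
Proof.
move=> c; apply/ffunP => i; apply/val_inj; rewrite /= !flipcE.
case: (eqVneq i j) => //= ->; case: (leqP (c j) 1) => h; last by rewrite leqNgt h.
have -> : (1 - c j <= 1)%N by lia. lia.
Qed.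

Definition inB (c : cell d) : bool :=
  [forall i, if i \in sigma then (c i <= 1)%N else (c i == 0 :> nat)].
Definition par (c : cell d) : nat := (\sum_(i in sigma) c i)%N.

Definition uB : {ffun cell d -> nat} := [ffun c => (inB c && ~~ odd (par c)) : nat].
Definition vB : {ffun cell d -> nat} := [ffun c => (inB c && odd (par c)) : nat].

Lemma inB_flip j (c : cell d) : j \in sigma -> inB (flipc j c) = inB c.
Proof.
move=> js; apply/forallP/forallP => H i; have := H i; rewrite !flipcE;
  case: (eqVneq i j) => [->|] //=; rewrite js; case: (leqP (c j) 1) => //=; lia.
Qed.

Lemma par_flip j (c : cell d) : j \in sigma -> (c j <= 1)%N -> odd (par (flipc j c)) = ~~ odd (par c).
Proof.
move=> js cj; rewrite /par (bigD1 j) //= [X in _ = ~~ odd X](bigD1 j) //=.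
have -> : (\sum_(i in sigma | i != j) flipc j c i = \sum_(i in sigma | i != j) c i)%N.
  by apply: eq_bigr => i /andP [_ ij]; rewrite flipcE (negbTE ij).
rewrite flipcE eqxx cj /= !oddD; have : ((c j : nat) = 0 \/ (c j : nat) = 1)%N by lia. by case => E; rewrite E /=; case: (odd _).
Qed.

Lemma uB_flip j (c : cell d) : j \in sigma -> uB (flipc j c) = vB c.
Proof.
move=> js; rewrite !ffunE inB_flip //; case iB: (inB c) => //=.
have cj : (c j <= 1)%N by have := forallP iB j; rewrite js.
by rewrite par_flip // negbK.
Qed.

Lemma agree_flip (F : {set 'I_n}) j (c a0 : cell d) : j \notin F -> agree_on F (flipc j c) a0 = agree_on F c a0.
Proof.
move=> jF; apply: eq_forallb => i; case iF: (i \in F) => //=.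
have ij : i != j by apply/eqP => E; move: jF; rewrite -E iF.
congr (_ == _); apply/val_inj; by rewrite /= flipcE (negbTE ij).
Qed.

End Construct.


Section Construct2.
Variables (n : nat) (d : 'I_n -> nat) (d2 : forall i, (2 <= d i)%N) (sigma : {set 'I_n}).

Lemma fiberB j (F : {set 'I_n}) (a0 : cell d) : j \in sigma -> j \notin F ->
  Mmul F a0 (uB d sigma) = Mmul F a0 (vB d sigma).
Proof.
move=> js jF; rewrite /Mmul (reindex_inj (inv_inj (flipcK d2 j))) /=.
apply: eq_big => [c|c _]; first exact: agree_flip.
exact: uB_flip.
Qed.

Lemma sum_uv j : j \in sigma -> (\sum_c uB d sigma c = \sum_c vB d sigma c)%N.
Proof.
move=> js; rewrite (reindex_inj (inv_inj (flipcK d2 j))) /=.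
by apply: eq_bigr => c _; apply: uB_flip.
Qed.

Lemma card_B : #|[set c : cell d | inB sigma c]| = 2 ^ #|sigma|.
Proof.
pose g (c : cell d) : {set 'I_n} := [set i | (c i : nat) == 1%N].
rewrite -card_powerset.
have -> : powerset sigma = g @: [set c : cell d | inB sigma c].
  apply/setP => T; rewrite powersetE; apply/idP/imsetP; last first.
    move=> [c]; rewrite inE => cB ->.
    apply/subsetP => i; rewrite inE => /eqP ci; have := forallP cB i.
    by case: (i \in sigma) => //=; rewrite ci.
  move=> Ts.
  pose e : cell d := [ffun i => Ordinal (lt_bit d2 i (i \in T))].
  exists e.
    rewrite inE; apply/forallP => i; rewrite ffunE /=.
    case: ifP => [_|iS]; first by case: (i \in T).
    have : i \notin T by apply/negP => /(subsetP Ts); rewrite iS.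
    by move/negbTE => ->.
  apply/setP => i; rewrite inE ffunE /=; by case: (i \in T).
rewrite card_in_imset //.
move=> c c'; rewrite !inE => cB c'B /setP E; apply/ffunP => i; apply/val_inj.
have := E i; rewrite !inE; have := forallP cB i; have := forallP c'B i.
case: (i \in sigma) => /= [h1 h2|/eqP -> /eqP -> //].
move: h1 h2; rewrite /=; case: (nat_of_ord (c i)) => [|[|x]] //; case: (nat_of_ord (c' i)) => [|[|y]] //.
Qed.

Lemma sum_uB : sigma != set0 -> (\sum_c uB d sigma c = 2 ^ (#|sigma| - 1))%N.
Proof.
move=> sne; have [j js] : exists j, j \in sigma by apply/set0Pn.
have tot : (\sum_c uB d sigma c + \sum_c vB d sigma c = 2 ^ #|sigma|)%N.
  rewrite -big_split -card_B -sum1_card big_mkcond [RHS]big_mkcond /=; apply: eq_bigr => c _.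
  by rewrite !ffunE inE; case: (inB sigma c); case: odd.
move: tot; rewrite -(sum_uv js).
have -> : #|sigma| = (#|sigma| - 1).+1 by have := card_gt0 sigma; rewrite sne; lia.
by rewrite expnS subSS subn0; lia.
Qed.

Definition c0 : cell d := [ffun i => Ordinal (lt_bit d2 i false)].

Lemma uB_c0 : uB d sigma c0 = 1%N.
Proof.
rewrite ffunE.
have -> : inB sigma c0 by apply/forallP => i; rewrite ffunE /=; case: ifP.
by rewrite /par big1 // => i _; rewrite ffunE.
Qed.

Lemma vB_c0 : vB d sigma c0 = 0%N.
Proof. by rewrite ffunE /par big1 ?andbF // => i _; rewrite ffunE. Qed.

End Construct2.

Section Poly.
Import GRing.Theory.
Local Open Scope ring_scope.

Definition mpm n (d : 'I_n -> nat) (u : {ffun cell d -> nat}) : 'X_{1..#|{: cell d}|} :=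
  (\sum_(c : cell d) U_(enum_rank c) *+ u c)%MM.

Lemma pmonomE (K : comNzRingType) n (d : 'I_n -> nat) (u : {ffun cell d -> nat}) :
  @pmonom K n d u = 'X_[mpm u].
Proof. by rewrite /pmonom /pvar /mpm mprodXnE. Qed.

Lemma mdeg_pm n (d : 'I_n -> nat) (u : {ffun cell d -> nat}) : mdeg (mpm u) = (\sum_c u c)%N.
Proof. by rewrite /mpm mdeg_sum; apply: eq_bigr => c _; rewrite mdegMn mdeg1 mul1n. Qed.

Lemma coord_pm n (d : 'I_n -> nat) (u : {ffun cell d -> nat}) (c0 : cell d) :
  (mpm u) (enum_rank c0) = u c0.
Proof.
rewrite /mpm mnm_sumE (bigD1 c0) //= big1 ?addn0.
  by rewrite mulmnE mnm1E eqxx mul1n.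
by move=> c cne; rewrite mulmnE mnm1E (inj_eq enum_rank_inj) (negbTE cne).
Qed.

Lemma mpolyX_neq0 (K : fieldType) m (mm : 'X_{1..m}) : 'X_[mm] != 0 :> {mpoly K[m]}.
Proof. by rewrite -msupp_eq0 msuppX. Qed.

Lemma prodX_set (K : fieldType) n (s : {set 'I_n}) :
  \prod_(i in s) ('X_i : {mpoly K[n]}) = 'X_[\sum_(i in s) U_(i)].
Proof. by rewrite (big_morph (fun m : 'X_{1..n} => ('X_[m] : {mpoly K[n]})) (@mpolyXD n K) (@mpolyX0 n K)). Qed.

Lemma mdeg_set n (s : {set 'I_n}) : mdeg (\sum_(i in s) U_(i))%MM = #|s|.
Proof. by rewrite mdeg_sum -sum1_card; apply: eq_bigr => i _; rewrite mdeg1. Qed.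

End Poly.

Theorem proposition4p2 (K : fieldType) (n : nat) (Delta : {set {set 'I_n}})
  (d : 'I_n -> nat) (k : nat) :
  simplicial_complex Delta ->
  ideal_nonzero (@SR_ideal K n Delta) ->
  initial_degree (@SR_ideal K n Delta) k ->
  (forall i, 2 <= d i)%N ->
  initial_degree (@toric_ideal K n Delta d) (2 ^ (k - 1))%N.
Proof.
move=> [DeltaNE closed] _ [[p0 [SRp0 p0nz p0h]] lowSR] d2.
have SRmon : forall s, s \notin Delta -> (k <= #|s|)%N.
  move=> s ns; rewrite -(mdeg_set s); apply: (lowSR ('X_[\sum_(i in s) U_(i)])).
  - exists [:: (1%R, 'X_[\sum_(i in s) U_(i)])]; split.
      by move=> x; rewrite inE => /eqP -> /=; exists s; rewrite prodX_set.
    by rewrite big_seq1 /= GRing.mul1r.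
  - exact: mpolyX_neq0.
  - by rewrite dhomogX.
have [sig [nsig csig]] : exists s, s \notin Delta /\ (#|s| <= k)%N.
  case: (boolP [exists s : {set 'I_n}, (s \notin Delta) && (#|s| <= k)%N]).
    by move=> /existsP [s /andP [h1 h2]]; exists s.
  move=> /existsPn H; exfalso.
  suff : (k.+1 <= k)%N by rewrite ltnn.
  apply: (@ideal_deg_bound K n (@SR_gen K n Delta) k.+1 k p0 _ SRp0 p0nz p0h) => g [s [ns ->]] mm; rewrite prodX_set msuppX inE => /eqP ->.
  by rewrite mdeg_set; have := H s; rewrite ns /= -ltnNge.
have ksig : #|sig| = k by apply/eqP; rewrite eqn_leq csig SRmon.
have faces : forall T : {set 'I_n}, (#|T| < k)%N -> T \in Delta.
  by move=> T lt; apply/negPn/negP => nT; have := SRmon T nT; lia.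
have sig0 : sig != set0.
  apply/negP => /eqP E; move: nsig; rewrite E; apply/negP/negPn.
  have [G GD] : exists G, G \in Delta.
    by case/set0Pn: DeltaNE => G GD; exists G.
  exact: closed GD (sub0set G).
have k1 : (0 < k)%N by rewrite -ksig card_gt0.
split.
  exists (pmonom K (uB d sig) - pmonom K (vB d sig))%R; split.
  - exists [:: (1%R, pmonom K (uB d sig) - pmonom K (vB d sig))%R]; split; last first.
      by rewrite big_seq1 /= GRing.mul1r.
    move=> x; rewrite inE => /eqP -> /=; exists (uB d sig), (vB d sig); split => //.
    move=> F [FD _] a0.
    have /subsetPn [j js jF] : ~~ (sig \subset F).
      by apply/negP => sF; move: nsig; rewrite (closed _ _ FD sF).
    exact: fiberB js jF.
  - rewrite !pmonomE GRing.subr_eq0; apply/negP => /eqP E.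
    have := congr1 (fun p => p@_(mpm (uB d sig)))%R E; rewrite !mcoeffX eqxx.
    case: eqP => [Em _|_ /eqP]; last by rewrite GRing.oner_eq0.
    have := congr1 (fun m : 'X_{1..#|{: cell d}|} => m (enum_rank (c0 d2))) Em.
    by rewrite /= !coord_pm uB_c0 vB_c0.
  - rewrite !pmonomE; apply: GRing.rpredB; rewrite dhomogX ?mdeg_pm.
      by apply/eqP; have := mdeg_pm (uB d sig); rewrite sum_uB // ksig.
    have [j js] : exists j, j \in sig by apply/set0Pn.
    by apply/eqP; have := mdeg_pm (vB d sig); rewrite -(sum_uv d2 js) sum_uB // ksig.
have key : forall u v : {ffun cell d -> nat}, same_fiber Delta u v -> u != v ->
    (2 ^ (k - 1) <= \sum_c u c)%N.
  move=> u v fib neq.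
  apply: (@core (cell d) 'I_n (fun c i => nat_of_ord (c i)) n (k - 1) setT u v).
  - by rewrite cardsT card_ord.
  - move=> c c' _ _ agr; apply/ffunP => i; apply/val_inj; exact: agr i (in_setT i).
  - have /existsP [c cne] : [exists c, u c != v c].
      apply: contraNT neq => /existsPn H; apply/eqP/ffunP => c.
      by have := H c; rewrite negbK => /eqP.
    by exists c.
  - move=> S _ cS f.
    have SD : S \in Delta by apply: faces; lia.
    have [F [Ffac SF]] := facet_exists SD.
    rewrite /marg /agreeS.
    rewrite (marg_from_facet _ u SF) (marg_from_facet _ v SF).
    by apply: eq_bigr => r _; apply: fib.
move=> p j [s [Hs ->]] pnz ph.
apply: (@ideal_deg_bound K _ (@toric_gen K n Delta d) _ j _ _ (ex_intro _ s (conj Hs erefl)) pnz ph).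
move=> g [u [v [fib ->]]] mm.
have [->|neq] := eqVneq u v; first by rewrite GRing.subrr msupp0.
rewrite !pmonomE => /msuppB_le; rewrite mem_cat !msuppX !inE => /orP [] /eqP ->;
  rewrite mdeg_pm.
  exact: key fib neq.
apply: (key v u) => [F Ff a0|]; first by rewrite fib.
by rewrite eq_sym.
Qed.
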